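(* Let $q=2^h$, let $n,s$ be positive integers, $\beta\in\mathbb{F}_{q^n}\setminus\{0,1\}$, and $\epsilon\in\mathbb{F}_{q^n}$ with $\mathrm{Tr}_{q^n/2}(\epsilon)=1$. Then the plane curve $\mathcal{C}_2$ with affine equation $F_2(X,Z)=0$, where \[ F_2(X,Z)=X^2(Z^2+Z+\epsilon)^{q^s}+X\bigl(\beta+\mathrm{Tr}_{q^s/2}(Z^2+Z+\epsilon)\bigr)+Z^2+Z+\epsilon, \] is absolutely irreducible.
   Context: $\mathrm{Tr}_{q^s/2}(Y)=\sum_{i=0}^{hs-1}Y^{2^i}$ (as a polynomial), and $\mathrm{Tr}_{q^n/2}(x)=\sum_{i=0}^{hn-1}x^{2^i}$ is the absolute trace of $\mathbb{F}_{q^n}$. Absolutely irreducible means irreducible over the algebraic closure of $\mathbb{F}_{q^n}$. *)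

(* Defs.v *)
From mathcomp Require Import all_boot all_order all_algebra all_field.
Set Implicit Arguments. Unset Strict Implicit. Unset Printing Implicit Defensive.
Import GRing.Theory.
Local Open Scope ring_scope.

(* Applied to L[Z][X] = {poly {poly L}},
   whose units are the nonzero constants, this is irreducibility of a
   bivariate polynomial in L[X,Z]. *)
Definition irreducible_elt (R : idomainType) (p : R) : Prop :=
  [/\ p != 0, p \isn't a GRing.unit &
      forall a b : R, p = a * b -> a \is a GRing.unit \/ b \is a GRing.unit].

(* Tr(x) = sum_{i < m} x^(2^i)  (absolute trace when m = [K:F_2]). *)
Definition trace2 (R : nzRingType) (m : nat) (x : R) : R :=
  \sum_(i < m) x ^+ (2 ^ i).

(* F_2(X,Z) as an element of F[Z][X]; the inner variable is Z, the outer X. *)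
Definition F2poly (F : fieldType) (q s h : nat) (beta eps : F)
  : {poly {poly F}} :=
  let T : {poly F} := 'X ^+ 2 + 'X + eps%:P in
  'X ^+ 2 * (T ^+ (q ^ s))%:P
  + 'X * (beta%:P + trace2 (h * s) T)%:P
  + T%:P.

(* Absolutely irreducible: irreducible over every algebraically closed
   field extension L of F (equivalently, over an algebraic closure). *)
Definition abs_irreducible2 (F : fieldType) (P : {poly {poly F}}) : Prop :=
  forall (L : closedFieldType) (f : {rmorphism F -> L}),
    irreducible_elt (map_poly (map_poly f) P).

(* Main.v *)
Require Import Defs.
From mathcomp Require Import all_boot all_order all_algebra all_field.
From mathcomp Require Import ring zify.
Set Implicit Arguments. Unset Strict Implicit. Unset Printing Implicit Defensive.
Import GRing.Theory.
Local Open Scope ring_scope.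

Section Core.
Variable L : fieldType.

Lemma dvd_other (k : nat) (rho : L) (Wo U V : {poly L}) :
  U * V = ('X - rho%:P) ^+ k * Wo -> ~~ root U rho -> ('X - rho%:P) ^+ k %| V.
Proof.
move=> E nr.
have : ('X - rho%:P) ^+ k %| U * V by rewrite E dvdp_mulr.
rewrite Gauss_dvdpr //.
by apply: coprimep_expl; rewrite coprimep_sym coprimep_XsubC.
Qed.

Lemma both_nonroot (k : nat) (a b : L) (U V : {poly L}) :
  U * V = ('X - a%:P) ^+ k * ('X - b%:P) ^+ k -> V != 0 -> b - a != 0 ->
  ~~ root U a -> ~~ root U b -> (2 * k + 1 <= size V)%N.
Proof.
move=> E nV ab na nb.
have d1 := dvd_other E na.
have d2 : ('X - b%:P) ^+ k %| V.
  by apply: (@dvd_other k b (('X - a%:P) ^+ k) U V _ nb); rewrite E mulrC.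
have cp : coprimep (('X - a%:P) ^+ k) (('X - b%:P) ^+ k).
  by apply/coprimep_expl/coprimep_expr/coprimep_XsubC2.
have : ('X - a%:P) ^+ k * ('X - b%:P) ^+ k %| V by rewrite Gauss_dvdp // d1 d2.
move/(dvdp_leq nV).
rewrite size_mul ?expf_neq0 ?polyXsubC_eq0 // !size_exp_XsubC.
by move=> H; apply: leq_trans H; rewrite addSn addnS /=; lia.
Qed.

Lemma mixed (k : nat) (a b : L) (U V : {poly L}) :
  U * V = ('X - a%:P) ^+ k * ('X - b%:P) ^+ k -> b - a = 1 -> a - b = 1 ->
  ~~ root V a -> ~~ root U b -> (0 < k)%N ->
  [/\ U.[b] * V.[a] = 1, U.[a] = 0 & V.[b] = 0].
Proof.
move=> E ba ab na nb kpos.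
have d1 : ('X - a%:P) ^+ k %| U.
  by apply: (@dvd_other k a (('X - b%:P) ^+ k) V U _ na); rewrite mulrC.
have d2 : ('X - b%:P) ^+ k %| V.
  by apply: (@dvd_other k b (('X - a%:P) ^+ k) U V _ nb); rewrite E mulrC.
case/dvdpP: d1 => u eU; case/dvdpP: d2 => v eV.
have nz : ('X - a%:P) ^+ k * ('X - b%:P) ^+ k != 0.
  by rewrite mulf_neq0 // expf_neq0 // polyXsubC_eq0.
have uv : u * v = 1.
  apply: (mulIf nz); rewrite mul1r -[in RHS]E eU eV; ring.
have uu : u \is a GRing.unit by apply/unitrP; exists v; rewrite uv mulrC uv.
have vu : v \is a GRing.unit by apply/unitrP; exists u; rewrite uv mulrC uv.
move: uu vu; rewrite !poly_unitE => /andP[/eqP su _] /andP[/eqP sv _].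
have eu := size1_polyC (eq_leq su); have ev := size1_polyC (eq_leq sv).
have c1 : u`_0 * v`_0 = 1.
  by apply: (@polyC_inj L); rewrite polyCM -eu -ev uv.
rewrite eU eV !hornerM !horner_exp !hornerXsubC eu ev !hornerC ba ab !subrr.
rewrite !expr1n !mulr1 c1; split => //;
  by move: kpos; clear -L; case: k => // k' _; rewrite expr0n /= mulr0.
Qed.

Lemma size_contra (k : nat) (U V : {poly L}) : (0 < k)%N ->
  (size U + size V = 2 * k + 2)%N -> (2 * k + 1 <= size V)%N ->
  (size (U + V)%R <= k)%N -> False.
Proof.
move=> kp s1 s2 s3.
have lt : (size U < size V)%N by lia.
by move: s3; rewrite addrC size_polyDl //; lia.
Qed.

Lemma core (k : nat) (a b beta : L) (B U V : {poly L}) :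
  (0 < k)%N -> b - a = 1 -> a - b = 1 -> beta * beta != 1 -> beta != 0 ->
  B.[a] = beta -> B.[b] = beta -> (size B <= k)%N ->
  U * V = ('X - a%:P) ^+ k * ('X - b%:P) ^+ k -> U + V = B -> False.
Proof.
move=> kp ba ab bb b0 Ba Bb sB E UVB.
have nz : ('X - a%:P) ^+ k * ('X - b%:P) ^+ k != 0.
  by rewrite mulf_neq0 // expf_neq0 // polyXsubC_eq0.
have U0 : U != 0 by apply: contraNneq nz => U0; rewrite -E U0 mul0r.
have V0 : V != 0 by apply: contraNneq nz => V0; rewrite -E V0 mulr0.
have sUV : (size U + size V = 2 * k + 2)%N.
  have := congr1 (fun p : {poly L} => size p) E; rewrite /=; rewrite size_mul // size_mul ?expf_neq0 ?polyXsubC_eq0 //.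
  rewrite !size_exp_XsubC.
  have : (0 < size U)%N by rewrite size_poly_gt0.
  have : (0 < size V)%N by rewrite size_poly_gt0.
  move=> hV hU; rewrite addnS /= => H; rewrite -(prednK (ltn_addr _ hU)) H; lia.
have k0 : (0:L) ^+ k = 0 by clear -kp; rewrite expr0n; case: k kp.
have Ea : U.[a] * V.[a] = 0.
  by rewrite -hornerM E hornerM !horner_exp !hornerXsubC subrr k0 mul0r.
have Eb : U.[b] * V.[b] = 0.
  by rewrite -hornerM E hornerM !horner_exp !hornerXsubC subrr k0 mulr0.
have Sa : U.[a] + V.[a] = beta by rewrite -hornerD UVB.
have Sb : U.[b] + V.[b] = beta by rewrite -hornerD UVB.
have ba0 : b - a != 0 by rewrite ba oner_neq0.
case rUa: (root U a); case rUb: (root U b).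
- move/rootP: rUa => rUa; move/rootP: rUb => rUb.
  have nVa : ~~ root V a by have := Sa; rewrite rootE rUa add0r => ->.
  have nVb : ~~ root V b by have := Sb; rewrite rootE rUb add0r => ->.
  have E' : V * U = ('X - a%:P) ^+ k * ('X - b%:P) ^+ k by rewrite mulrC.
  have s2 := both_nonroot E' U0 ba0 nVa nVb.
  apply: (@size_contra k V U kp _ s2); first by rewrite addnC.
  by rewrite addrC UVB.
- move/rootP: rUa => rUa.
  have nVa : ~~ root V a by have := Sa; rewrite rootE rUa add0r => ->.
  have [H1 _ H3] := mixed E ba ab nVa (negbT rUb) kp.
  move: Sa Sb; rewrite rUa H3 add0r addr0 => Sa Sb.
  by move: H1; rewrite Sa Sb; apply/eqP.
- move/rootP: rUb => rUb.
  have nVb : ~~ root V b by have := Sb; rewrite rootE rUb add0r => ->.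
  have E' : U * V = ('X - b%:P) ^+ k * ('X - a%:P) ^+ k by rewrite E mulrC.
  have [H1 _ H3] := mixed E' ab ba nVb (negbT rUa) kp.
  move: Sa Sb; rewrite rUb H3 add0r addr0 => Sa Sb.
  by move: H1; rewrite Sa Sb; apply/eqP.
- have s2 := both_nonroot E V0 ba0 (negbT rUa) (negbT rUb).
  by apply: (size_contra kp sUV s2); rewrite UVB.
Qed.
End Core.

Section Outer.
Variable L : closedFieldType.
Hypothesis c2 : (2%N \in [pchar L]).
Variables (m : nat) (beta e : L).

Definition Tq : {poly L} := 'X ^+ 2 + 'X + e%:P.

Lemma two_poly : (2%:R : {poly L}) = 0.
Proof. by rewrite -polyC_natr (pcharf0 c2). Qed.

Lemma Tq_root : exists r, root Tq r.
Proof.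
have c : Tq`_2 = 1 by rewrite /Tq !coefD coefXn coefX coefC /= !addr0.
have [s1|ns1] := eqVneq (size Tq) 1%N; last first.
  exact: (elimT (closed_rootP Tq) ns1).
by move: c; rewrite nth_default ?s1 // => /eqP; rewrite eq_sym oner_eq0.
Qed.

Lemma Tq_factor r : root Tq r -> Tq = ('X - r%:P) * ('X - (r + 1)%:P).
Proof.
rewrite rootE /Tq !hornerE => /eqP hr.
have h0 : r%:P ^+ 2 + r%:P + e%:P = 0 :> {poly L}.
  by rewrite -rmorphXn -!polyCD hr.
apply/eqP; rewrite -subr_eq0 polyCD polyC1.
have -> : 'X ^+ 2 + 'X + e%:P - ('X - r%:P) * ('X - (r%:P + 1)) =
   2%:R * ('X + r%:P * 'X + e%:P) - (r%:P ^+ 2 + r%:P + e%:P) :> {poly L}.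
  ring.
by rewrite h0 two_poly mul0r subrr.
Qed.

Lemma Bp_at z : Tq.[z] = 0 -> (beta%:P + trace2 m Tq).[z] = beta.
Proof.
move=> hz; rewrite hornerD hornerC /trace2 horner_sum big1 ?addr0 // => i _.
by rewrite horner_exp hz expr0n expn_eq0.
Qed.


Definition Bq : {poly L} := beta%:P + trace2 m Tq.
Definition Aq : {poly L} := Tq ^+ (2 ^ m).
Definition Pq : {poly {poly L}} :=
  'X ^+ 2 * Aq%:P + 'X * Bq%:P + Tq%:P.

Lemma size_Tq : size Tq = 3%N.
Proof.
have [r hr] := Tq_root; rewrite (Tq_factor hr) size_mul ?polyXsubC_eq0 //.
by rewrite !size_XsubC.
Qed.

Lemma Tq_neq0 : Tq != 0.
Proof. by rewrite -size_poly_eq0 size_Tq. Qed.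

Lemma size_Bq : (size Bq <= (2 ^ m).+1)%N.
Proof.
rewrite /Bq; apply: leq_trans (size_polyD _ _) _; rewrite geq_max.
rewrite (leq_trans (size_polyC_leq1 _)) //=.
apply: leq_trans (size_sum _ _ _) _; apply/bigmax_leqP => i _.
apply: leq_trans (size_poly_exp_leq _ _) _; rewrite size_Tq /= ltnS.
by rewrite -expnS leq_exp2l.
Qed.

Lemma Pq_Poly : Pq = Poly [:: Tq; Bq; Aq].
Proof.
apply/polyP => i; rewrite coef_Poly /Pq !coefD coefXnM coefXM !coefC.
by case: i => [|[|[|i]]] //=; rewrite ?add0r ?addr0 // nth_nil.
Qed.

Lemma Aq_neq0 : Aq != 0.
Proof. by rewrite expf_neq0 // Tq_neq0. Qed.

Lemma size_Pq : size Pq = 3%N.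
Proof. by rewrite Pq_Poly (PolyK (c := 0)) //= Aq_neq0. Qed.

Lemma coef_Pq0 : Pq`_0 = Tq.
Proof. by rewrite Pq_Poly coef_Poly. Qed.
Lemma coef_Pq1 : Pq`_1 = Bq.
Proof. by rewrite Pq_Poly coef_Poly. Qed.
Lemma coef_Pq2 : Pq`_2 = Aq.
Proof. by rewrite Pq_Poly coef_Poly. Qed.

Hypothesis b0 : beta != 0.
Hypothesis b1 : beta != 1.

Lemma const_unit p1 p2 : Pq = p1 * p2 -> size p1 = 1%N -> p1 \is a GRing.unit.
Proof.
move=> E s1.
have ep := size1_polyC (eq_leq s1).
set g := p1`_0 in ep.
have g0 : g != 0.
  by apply: contra_eq_neq s1 => g0; rewrite ep g0 size_poly0.
rewrite poly_unitE s1 eqxx /= -/g poly_unitE.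
have [sg|nsg] := eqVneq (size g) 1%N.
  by rewrite /= unitfE; have := g0; rewrite -lead_coef_eq0 lead_coefE sg.
have [z hz] := elimT (closed_rootP g) nsg.
have e0 : Tq = g * p2`_0 by rewrite -coef_Pq0 E ep coefCM.
have e1 : Bq = g * p2`_1 by rewrite -coef_Pq1 E ep coefCM.
have Tz : Tq.[z] = 0 by rewrite e0 hornerM (rootP hz) mul0r.
have := Bp_at Tz; rewrite -/Bq e1 hornerM (rootP hz) mul0r => bz.
by move: b0; rewrite -bz eqxx.
Qed.


Lemma bb1 : beta * beta != 1.
Proof.
apply: contra b1 => /eqP h.
have : (beta - 1) * (beta - 1) = 0.
  have -> : (beta - 1) * (beta - 1) = beta * beta - 1 - (beta + beta) + (1 + 1)
    by ring.
  by rewrite h subrr add0r (addrr_pchar2 c2 beta) (addrr_pchar2 c2 1) oppr0 add0r.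
by move/eqP; rewrite mulf_eq0 orbb subr_eq0.
Qed.

Lemma Pq_irr : irreducible_elt Pq.
Proof.
have sP := size_Pq.
split; first by rewrite -size_poly_eq0 sP.
  by rewrite poly_unitE sP.
move=> p1 p2 E.
have n1 : p1 != 0 by apply: contra_eq_neq sP => p0; rewrite E p0 mul0r size_poly0.
have n2 : p2 != 0 by apply: contra_eq_neq sP => p0; rewrite E p0 mulr0 size_poly0.
have s12 : (size p1 + size p2 = 4)%N.
  move: sP; rewrite E size_mul //.
  have : (0 < size p1)%N by rewrite size_poly_gt0.
  have : (0 < size p2)%N by rewrite size_poly_gt0.
  lia.
have [s1|s1] := eqVneq (size p1) 1%N; first by left; exact: const_unit E s1.
have [s2|s2] := eqVneq (size p2) 1%N.
  by right; apply: (const_unit (p2 := p1)) => //; rewrite E mulrC.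
exfalso.
have h1 : size p1 = 2%N.
  have : (0 < size p1)%N by rewrite size_poly_gt0.
  have : (0 < size p2)%N by rewrite size_poly_gt0.
  move: s1 s2 => /eqP s1 /eqP s2; lia.
have h2 : size p2 = 2%N by lia.
have p12 : p1`_2 = 0 by rewrite nth_default ?h1.
have p22 : p2`_2 = 0 by rewrite nth_default ?h2.
have c0 : Tq = p1`_0 * p2`_0.
  by rewrite -coef_Pq0 E coefM big_ord_recl big_ord0 addr0.
have c1 : Bq = p1`_0 * p2`_1 + p1`_1 * p2`_0.
  by rewrite -coef_Pq1 E coefM !big_ord_recl big_ord0 addr0.
have c2' : Aq = p1`_1 * p2`_1.
  rewrite -coef_Pq2 E coefM !big_ord_recl big_ord0 addr0 /=.
  by rewrite p22 p12 mulr0 mul0r add0r addr0.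
have [r hr] := Tq_root.
have fr := Tq_factor hr.
have Tr : Tq.[r] = 0 by apply/rootP.
have Tr1 : Tq.[r + 1] = 0 by rewrite fr hornerM !hornerXsubC subrr mulr0.
apply: (@core L (2 ^ m).+1 r (r + 1) beta Bq (p1`_0 * p2`_1) (p1`_1 * p2`_0)).
- by [].
- by rewrite addrAC subrr add0r.
- by rewrite opprD addrA subrr add0r (oppr_pchar2 c2).
- exact: bb1.
- exact: b0.
- exact: Bp_at.
- exact: Bp_at.
- exact: size_Bq.
- by rewrite -exprMn -fr exprS -/Aq c0 c2'; ring.
- by symmetry; exact: c1.
Qed.

End Outer.
Lemma map_shape (R S : nzRingType) (g : {rmorphism R -> S}) (A B C : R) :
  map_poly g ('X ^+ 2 * A%:P + 'X * B%:P + C%:P) =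
  'X ^+ 2 * (g A)%:P + 'X * (g B)%:P + (g C)%:P.
Proof. by rewrite !rmorphD !rmorphM /= map_polyX !map_polyC -expr2. Qed.

Unset Implicit Arguments.
Theorem lemma3p11 (h n s : nat) (F : finFieldType) (beta eps : F) :
  (0 < h)%N -> (0 < n)%N -> (0 < s)%N ->
  #|F| = ((2 ^ h) ^ n)%N ->
  beta != 0 -> beta != 1 ->
  trace2 (h * n) eps = 1 ->
  abs_irreducible2 (F2poly (2 ^ h) s h beta eps).
Proof.
move=> hp np sp card b0 b1 _ L f.
have cF : (2%N \in [pchar F]).
  by apply: (@card_finPcharP _ 2 (h * n)); rewrite ?expnM.
have cL : (2%N \in [pchar L]) by apply: (rmorph_pchar f).
have -> : map_poly (map_poly f) (F2poly (2 ^ h) s h beta eps) = @Pq L (h * s) (f beta) (f eps).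
  have mT : map_poly f ('X ^+ 2 + 'X + eps%:P) = 'X ^+ 2 + 'X + (f eps)%:P.
    by rewrite !rmorphD /= rmorphXn /= map_polyX map_polyC.
  rewrite /F2poly map_shape /Pq /Aq /Bq /Tq /trace2 -expnM.
  rewrite (rmorphXn (map_poly f)) /= mT (rmorphD (map_poly f)) /= map_polyC.
  rewrite (rmorph_sum (map_poly f)).
  by congr (_ + _ * (_ + _)%:P + _); apply: eq_bigr => i _; rewrite rmorphXn /= mT.
apply: (Pq_irr cL); by rewrite ?fmorph_eq0 ?fmorph_eq1.
Qed.
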